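(* Let $k\ge2$. Then $\mathfrak a_kL_{k-1}=L_k\mathfrak a_k$ as operators $\mathbb R^{\Xi_{k-1}}\to\mathbb R^{\Xi_k}$.
   Context: $V$ is a finite set with symmetric non-negative weights $c_{xy}=c_{yx}\ge0$, $\alpha=(\alpha_x)$ positive. $\Xi_m:=\{\eta\in\mathbb N_0^V:\sum_x\eta_x=m\}$. $L_mf(\eta)=\sum_x\eta_x\sum_yc_{xy}(\alpha_y+\eta_y)(f(\eta-\delta_x+\delta_y)-f(\eta))$ for $f:\Xi_m\to\mathbb R$, where $\eta-\delta_x+\delta_y$ moves one particle from $x$ to $y$. $\mathfrak a_k g(\eta)=\sum_x\eta_x g(\eta-\delta_x)$ for $g:\Xi_{k-1}\to\mathbb R$, $\eta\in\Xi_k$. *)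

(* Defs.v *)
From mathcomp Require Import all_boot all_order all_algebra.
From mathcomp Require Import reals.
Set Implicit Arguments. Unset Strict Implicit. Unset Printing Implicit Defensive.
Import Order.TTheory GRing.Theory Num.Theory.

Definition config (V : finType) := {ffun V -> nat}.

(* total number of particles  sum_x eta_x ;  Xi_m = {eta | mass eta = m} *)
Definition mass (V : finType) (eta : config V) : nat := (\sum_(x : V) eta x)%N.

(* eta - delta_x + delta_y  (used only when eta_x >= 1) *)
Definition move (V : finType) (eta : config V) (x y : V) : config V :=
  [ffun z => ((eta z - (z == x)) + (z == y))%N].

(* eta - delta_x  (used only when eta_x >= 1) *)
Definition remove (V : finType) (eta : config V) (x : V) : config V :=
  [ffun z => (eta z - (z == x))%N].

Local Open Scope ring_scope.

Definition Lgen (R : realType) (V : finType) (c : V -> V -> R) (alpha : V -> R)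
  (f : config V -> R) (eta : config V) : R :=
  \sum_(x : V) (eta x)%:R *
     \sum_(y : V) c x y * (alpha y + (eta y)%:R) * (f (move eta x y) - f eta).

Definition acre (R : realType) (V : finType) (g : config V -> R) (eta : config V) : R :=
  \sum_(x : V) (eta x)%:R * g (remove eta x).

(* Main.v *)
Require Import Defs.
From mathcomp Require Import all_boot all_order all_algebra.
From mathcomp Require Import reals.
From mathcomp Require Import ring zify.
Import Order.TTheory GRing.Theory Num.Theory.
Local Open Scope ring_scope.

Lemma rem_move_y (V : finType) (eta : config V) x y :
  remove (move eta x y) y = remove eta x.
Proof. by apply/ffunP => w; rewrite !ffunE; case: (w == y) => /=; rewrite ?addn1 ?addn0 ?subn1 ?subn0. Qed.

Lemma move_rem (V : finType) (eta : config V) x y z :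
  (1 <= eta z)%N -> (1 <= remove eta z x)%N ->
  move (remove eta z) x y = remove (move eta x y) z.
Proof.
move=> hz; rewrite ffunE => hx; apply/ffunP => w; rewrite !ffunE.
have [->|hwz] := eqVneq w z; last by rewrite !subn0.
move: hx; rewrite eq_sym; have [<-|hzx] := eqVneq z x; case: (z == y) => /=; lia.
Qed.

Lemma natr_true (R : pzRingType) : (true%:R : R) = 1. Proof. exact: mulr1n. Qed.
Lemma natr_false (R : pzRingType) : (false%:R : R) = 0. Proof. exact: mulr0n. Qed.

Ltac kill := repeat match goal with
 | H : is_true (?a != ?b) |- _ =>
    rewrite ?(negbTE H) ?(eq_sym b a) ?(negbTE H); clear H
 end; rewrite ?eqxx ?natr_true ?natr_false.

Lemma sum_delta (R : comRingType) (V : finType) (y : V) (U : R) :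
  \sum_(z : V) ((z == y)%:R * U) = U.
Proof.
rewrite (bigD1 y) //= eqxx mul1r big1 ?addr0 // => z /negbTE ->.
by rewrite mul0r.
Qed.

Theorem propositionA5 (R : realType) (V : finType) (c : V -> V -> R) (alpha : V -> R)
  (c_sym : forall x y, c x y = c y x)
  (c_ge0 : forall x y, 0 <= c x y)
  (alpha_gt0 : forall x, 0 < alpha x)
  (k : nat) (hk : (2 <= k)%N) (f : config V -> R) (eta : config V) :
  mass eta = k ->
  acre (Lgen c alpha f) eta = Lgen c alpha (acre f) eta.
Proof.
move=> _.
set e := fun w => (eta w)%:R : R.
set d := fun a b : V => ((a == b)%:R : R).
set G := fun x y z => f (remove (move eta x y) z).
set fz := fun z => f (remove eta z).
have LHS : acre (Lgen c alpha f) eta = \sum_z \sum_x \sum_y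
   e z * ((e x - d x z) * (c x y * (alpha y + e y - d y z) * (G x y z - fz z))).
  rewrite /acre /Lgen; apply: eq_bigr => z _.
  have [ez0|hz] := posnP (eta z).
    by rewrite ez0 mul0r big1 // => x _; rewrite big1 // => y _; rewrite /e ez0 mul0r.
  rewrite mulr_sumr; apply: eq_bigr => x _.
  have [hx0|hx] := posnP (remove eta z x).
    rewrite hx0 mul0r big1 ?mulr0 //.
    move: hx0; rewrite ffunE /e /d => hx0.
    suff -> : (eta x)%:R - (x == z)%:R = 0 :> R by move=> *; rewrite mul0r mulr0.
    rewrite -natrB ?hx0 //; move: hx0; have [->|hxz] := eqVneq x z => //= _; lia.
  rewrite !mulr_sumr; apply: eq_bigr => y _.
  have -> : ((remove eta z) x)%:R = e x - d x z.
    by rewrite ffunE /e /d natrB //; case: eqP => [->|] //=.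
  have -> : ((remove eta z) y)%:R = e y - d y z.
    by rewrite ffunE /e /d natrB //; case: eqP => [->|] //=.
  rewrite move_rem // /G /fz; ring.
have RHS : Lgen c alpha (acre f) eta = \sum_x \sum_y \sum_z
   e x * (c x y * (alpha y + e y) * ((e z - d z x + d z y) * G x y z - e z * fz z)).
  rewrite /Lgen /acre; apply: eq_bigr => x _.
  have [ex0|hx] := posnP (eta x).
    by rewrite ex0 mul0r big1 // => y _; rewrite big1 // => z _; rewrite /e ex0 mul0r.
  rewrite mulr_sumr; apply: eq_bigr => y _.
  rewrite -sumrB !mulr_sumr; apply: eq_bigr => z _.
  have -> : ((move eta x y) z)%:R = e z - d z x + d z y.
    rewrite ffunE /e /d natrD natrB //; have [->|] := eqVneq z x => //.
  rewrite /G /fz; ring.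
have Gyy : forall x y, G x y y = fz x by move=> x y; rewrite /G /fz rem_move_y.
rewrite LHS RHS exchange_big /=.
under eq_bigr => x _ do rewrite exchange_big /=.
apply/eqP; rewrite -subr_eq0 -sumrB; apply/eqP.
rewrite (eq_bigr (fun x => \sum_y c x y * (e x * e y * (fz y - fz x)))); last first.
  move=> x _; rewrite -sumrB; apply: eq_bigr => y _; rewrite -sumrB.
  set a := alpha y + e y.
  rewrite (eq_bigr (fun z => d z y * (c x y * ((- e y * e x + e y * d x y - e x * a) * fz x + e y * e x * fz y))
      + d z x * (c x y * (e x * a * fz x - d x y * e x * fz x)))); last first.
    move=> z _; rewrite /d /a.
    have [<-|hzy] := eqVneq z y; have [<-|hzx] := eqVneq z x; kill; rewrite ?Gyy; ring.
  rewrite big_split /= !sum_delta /d /a.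
  have [<-|hxy] := eqVneq x y; kill; ring.
rewrite (eq_bigr (fun x => \sum_y c x y * e x * e y * fz y - \sum_y c x y * e x * e y * fz x)); last first.
  by move=> x _; rewrite -sumrB; apply: eq_bigr => y _; ring.
rewrite sumrB exchange_big /=.
apply/eqP; rewrite subr_eq0; apply/eqP; apply: eq_bigr => y _; apply: eq_bigr => x _.
by rewrite c_sym; ring.
Qed.
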